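(* Let $n\ge 3$ and $N=r(n,n)$. Let $G$ be a bichromatic graph on $N$ vertices, and suppose $G$ contains distinct unbuilt pairs $p_1,\ldots,p_s$ and distinct unbuilt pairs $q_1,\ldots,q_t$ such that $p_i$ is independent to $q_j$ for every $1\le i\le s$ and $1\le j\le t$. Then $s(G)\ge \min(s,t)$.
   Context: $r(n,n)$ is the least $N$ such that every red/blue colouring of the edges of $K_N$ contains a monochromatic $K_n$. A bichromatic graph is a triple $G=(V,R,B)$ with $R,B\subseteq\binom{V}{2}$ and $R\cap B=\emptyset$; $R$ are the red edges, $B$ the blue edges, and $e(G)=|R|+|B|$. An unbuilt pair of $G$ is a pair of distinct vertices $u,v$ with $uv\notin R\cup B$. Two vertex-disjoint pairs $(u_1,u_2)$ and $(v_1,v_2)$ are independent in $G$ if both are unbuilt and there exist a red edge $u_iv_j\in R$ and a blue edge $u_{i'}v_{j'}\in B$ for some (not necessarily distinct) $i,i',j,j'\in\{1,2\}$. The $(n,n;N)$-game: Builder and Painter play on $N$ vertices; each turn Builder builds an edge between two non-adjacent vertices and Painter colours it red or blue; Builder wins once a monochromatic $K_n$ (red or blue) appears. For a bichromatic graph $G$ on $N$ vertices, $s(G)$ is the largest nonnegative integer $s$ such that Builder has a strategy that, starting the $(n,n;N)$-game from the position $G$ (its already built and coloured edges), guarantees a win using at most $\binom{N}{2}-e(G)-s$ further moves regardless of Painter's play. *)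

(* Defs.v *)
From mathcomp Require Import all_boot.
Set Implicit Arguments. Unset Strict Implicit. Unset Printing Implicit Defensive.

Definition is_pair (N : nat) (e : {set 'I_N}) : bool := #|e| == 2.

(* A red/blue colouring of the edges of K_N (true = red, false = blue);
   only the values on 2-element sets matter. *)
Definition colouring (N : nat) := {ffun {set 'I_N} -> bool}.

Definition has_mono_Kn (n N : nat) (c : colouring N) : Prop :=
  exists (S : {set 'I_N}) (b : bool), #|S| = n /\
    forall e : {set 'I_N}, is_pair e -> e \subset S -> c e = b.

Definition ramsey_prop (n N : nat) : Prop := forall c : colouring N, has_mono_Kn n c.

Definition is_ramsey_number (n N : nat) : Prop :=
  ramsey_prop n N /\ forall M, M < N -> ~ ramsey_prop n M.

Definition bigraph (N : nat) := ({set {set 'I_N}} * {set {set 'I_N}})%type.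

Definition red (N : nat) (G : bigraph N) := G.1.
Definition blue (N : nat) (G : bigraph N) := G.2.

Definition is_bichromatic (N : nat) (G : bigraph N) : Prop :=
  (forall e, e \in red G -> is_pair e) /\ (forall e, e \in blue G -> is_pair e) /\
  [disjoint red G & blue G].

Definition num_edges (N : nat) (G : bigraph N) : nat := #|red G| + #|blue G|.

Definition unbuilt (N : nat) (G : bigraph N) (e : {set 'I_N}) : bool :=
  is_pair e && (e \notin red G) && (e \notin blue G).

Definition independent (N : nat) (G : bigraph N) (p q : {set 'I_N}) : Prop :=
  [disjoint p & q] /\ unbuilt G p /\ unbuilt G q /\
  (exists u v, [/\ u \in p, v \in q & [set u; v] \in red G]) /\
  (exists u v, [/\ u \in p, v \in q & [set u; v] \in blue G]).

Definition mono_Kn (n N : nat) (G : bigraph N) : bool :=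
  [exists S : {set 'I_N}, (#|S| == n) &&
     ([forall e : {set 'I_N}, (is_pair e && (e \subset S)) ==> (e \in red G)] ||
      [forall e : {set 'I_N}, (is_pair e && (e \subset S)) ==> (e \in blue G)])].

Definition add_edge (N : nat) (G : bigraph N) (e : {set 'I_N}) (c : bool) : bigraph N :=
  if c then (e |: red G, blue G) else (red G, e |: blue G).

Fixpoint builder_wins (n N : nat) (k : nat) (G : bigraph N) : bool :=
  mono_Kn n G ||
  (if k is k'.+1 then
     [exists e : {set 'I_N}, unbuilt G e &&
        [forall c : bool, builder_wins n k' (add_edge G e c)]]
   else false).

Definition sG (n N : nat) (G : bigraph N) : nat :=
  \max_(s < 'C(N, 2).+1 | (s <= 'C(N, 2) - num_edges G) &&
                          builder_wins n ('C(N, 2) - num_edges G - s) G) s.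

(* Main.v *)
Require Import Defs.
From mathcomp Require Import all_boot.
From mathcomp Require Import zify.
From Stdlib Require Import Classical.
Set Implicit Arguments. Unset Strict Implicit. Unset Printing Implicit Defensive.

Lemma disjP (T : finType) (A B : {set T}) :
  (forall x, x \in A -> x \in B -> False) -> [disjoint A & B].
Proof.
move=> H; apply/pred0P => x /=; apply/negP => /andP[a b]; exact: H a b.
Qed.

Lemma cardsU_disj (T : finType) (A B : {set T}) :
  [disjoint A & B] -> #|A :|: B| = #|A| + #|B|.
Proof. by rewrite cardsU => /disjoint_setI0 ->; rewrite cards0 subn0. Qed.

Lemma bw_mono (n N : nat) k k' (G : bigraph N) :
  k <= k' -> builder_wins n k G -> builder_wins n k' G.
Proof.
elim: k k' G => [|k IH] [|k'] G //= Hk.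
- by rewrite orbF => ->.
- move/orP=> [->//|/existsP[e /andP[He /forallP Hc]]].
  apply/orP; right; apply/existsP; exists e; rewrite He; apply/forallP=> c.
  exact: IH (Hc c).
Qed.

Definition ext N (G : bigraph N) (E : {set {set 'I_N}}) (H : bigraph N) : Prop :=
  [/\ red G \subset red H, blue G \subset blue H, red H \subset red G :|: E,
      blue H \subset blue G :|: E & E \subset red H :|: blue H].

Lemma build (n N : nat) (E : {set {set 'I_N}}) (G : bigraph N) (k : nat) :
  (forall e, e \in E -> unbuilt G e) ->
  (forall H, ext G E H -> builder_wins n k H) -> builder_wins n (#|E| + k) G.
Proof.
move: {2}#|E| (erefl #|E|) => m.
elim: m E G => [|m IH] E G HE Hu Hw.
- have E0 : E = set0 by apply/eqP; rewrite -cards_eq0 HE.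
  subst E; rewrite cards0; apply: Hw; split; rewrite ?setU0 ?sub0set //.
- have : 0 < #|E| by rewrite HE.
  case/card_gt0P => e eE.
  rewrite HE addSn /=; apply/orP; right; apply/existsP; exists e.
  rewrite Hu //=; apply/forallP => c.
  have HE' : #|E :\ e| = m by move: HE; rewrite (cardsD1 e E) eE add1n => -[].
  rewrite -HE'.
  case: G Hu Hw => R B Hu Hw.
  apply: IH => //.
  + move=> e' /setD1P [ne e'E]; move: (Hu _ e'E).
    by rewrite /unbuilt /add_edge; case: c; rewrite /red /blue /= ?in_setU1 (negbTE ne).
  + case=> RH BH; rewrite /ext /add_edge; case: c; rewrite /red /blue /= =>
      -[r1 b1 r2 b2 eH]; apply: Hw; split; rewrite /red /blue /=;
      apply/subsetP => x xin; move: (subsetP r1 x) (subsetP b1 x) (subsetP r2 x)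
      (subsetP b2 x) (subsetP eH x); rewrite !inE;
      move: xin; (have [->|nx] := eqVneq x e; [rewrite ?eE ?eqxx /=; rewrite ?inE|
        rewrite ?(negbTE nx) /=; rewrite ?inE]); move=> *;
      (do ? match goal with H : is_true true -> _ |- _ => specialize (H isT) end);
      rewrite ?orbT ?orbF //; try tauto; try (apply/orP; tauto).
Qed.

Lemma arith (e p q r C : nat) : e + p + q + r <= C ->
  minn p q < C.+1 /\ minn p q <= C - r /\ e + maxn p q <= C - r - minn p q.
Proof. move=> h; split; [|split]; lia. Qed.

Lemma side (n N : nat) (RH BH R1 B1 X : {set {set 'I_N}}) (S : {set 'I_N}) (b : bool) :
  #|S| = n -> RH \subset R1 -> BH \subset B1 -> X \subset R1 :|: B1 ->
  (forall e, is_pair e -> e \subset S -> e \notin X -> (e \in RH) || (e \in BH)) ->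
  (forall e, is_pair e -> e \subset S -> (if e \in X then e \in R1 else e \in RH) = b) ->
  mono_Kn n (R1, B1).
Proof.
move=> cS r1 b1 x1 cov Hc.
apply/existsP; exists S; rewrite cS eqxx /=.
case: b Hc => Hc; [apply/orP; left|apply/orP; right]; apply/forallP => e;
  apply/implyP => /andP[pe eS]; move: (Hc e pe eS); rewrite /red /blue /=.
- case: ifP => // _ eR; exact: (subsetP r1).
- case: ifP => eX.
  + move=> eR; move: (subsetP x1 e eX); by rewrite inE eR.
  + move=> eR; move: (cov e pe eS (negbT eX)); rewrite eR /=; exact: (subsetP b1).
Qed.

Theorem lemma2p5 (n N : nat) (G : bigraph N) (P Q : {set {set 'I_N}}) :
  3 <= n ->
  is_ramsey_number n N ->
  is_bichromatic G ->
  (forall p, p \in P -> unbuilt G p) ->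
  (forall q, q \in Q -> unbuilt G q) ->
  (forall p q, p \in P -> q \in Q -> independent G p q) ->
  minn #|P| #|Q| <= sG n G.
Proof.
case: G => R B.
move=> _ [Ram _] [Rp [Bp RBd]] HP HQ Hind.
rewrite /red /blue /= in Rp Bp RBd.
have pairU e : is_pair e -> [|| e \in R, e \in B | unbuilt (R, B) e].
  by rewrite /unbuilt /red /blue /= => ->; case: (e \in R); case: (e \in B).
have PQd e : e \in P -> e \in Q -> False.
  move=> eP eQ; case: (Hind _ _ eP eQ) => d _.
  have := disjoint_setI0 d; rewrite setIid => e0.
  by move: (HP e eP); rewrite /unbuilt e0 /is_pair cards0.
set E0 := [set e | unbuilt (R, B) e && (e \notin P) && (e \notin Q)].
have unbE e : unbuilt (R, B) e -> [/\ is_pair e, e \notin R & e \notin B].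
  by rewrite /unbuilt /red /blue /= => /andP[/andP[-> ->] ->].
have cnt : #|E0| + #|P| + #|Q| + (#|R| + #|B|) <= 'C(N, 2).
  have <- : #|E0 :|: P :|: Q :|: (R :|: B)| = #|E0| + #|P| + #|Q| + (#|R| + #|B|).
    rewrite !cardsU_disj //; apply: disjP => x; rewrite !inE.
    - by move=> /andP[/andP[_ /negP]].
    - by case/orP => [/andP[_ /negP]|/PQd].
    - move=> h; have [_ /negbTE -> /negbTE ->] : [/\ is_pair x, x \notin R & x \notin B] by
        move: h => /orP[/orP[/andP[/andP[/unbE]]|/HP/unbE]|/HQ/unbE].
      done.
  rewrite -[X in _ <= 'C(X, 2)](card_ord N) -card_draws; apply: subset_leq_card.
  apply/subsetP => x; rewrite !inE -/(is_pair x).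
  case/orP => [/orP[/orP[/andP[/andP[/unbE[]]]|/HP/unbE[]]|/HQ/unbE[]]|/orP[/Rp|/Bp]] //.
have win : builder_wins n (#|E0| + maxn #|P| #|Q|) (R, B).
  apply: build.
    by move=> e; rewrite inE => /andP[/andP[]].
  case=> RH BH; rewrite /ext /red /blue /= => -[r1 b1 r2 b2 eH].
  have covH e : is_pair e -> e \notin P -> e \notin Q -> (e \in RH) || (e \in BH).
    move=> pe nP nQ; case/or3P: (pairU e pe) => [eR|eB|eU].
    - by rewrite (subsetP r1 _ eR).
    - by rewrite (subsetP b1 _ eB) orbT.
    - have : e \in E0 by rewrite inE eU nP nQ.
      by move/(subsetP eH); rewrite inE.
  have unbH e : e \in P :|: Q -> unbuilt (RH, BH) e.
    rewrite inE => ePQ.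
    have [pe nR nB] : [/\ is_pair e, e \notin R & e \notin B]
      by case/orP: ePQ => [/HP|/HQ] /unbE.
    have nE : e \notin E0 by rewrite inE; case/orP: ePQ => ->; rewrite /= ?andbF.
    rewrite /unbuilt /red /blue /= pe /=; apply/andP; split.
    - apply/negP => /(subsetP r2); rewrite inE (negbTE nR) /=; exact/negP.
    - apply/negP => /(subsetP b2); rewrite inE (negbTE nB) /=; exact/negP.
  have claim : (forall H, ext (RH, BH) P H -> builder_wins n 0 H) \/
               (forall H, ext (RH, BH) Q H -> builder_wins n 0 H).
    apply: NNPP => /not_or_and [h1 h2].
    have [H1 hh1] := not_all_ex_not _ _ h1; have [e1 m1] := imply_to_and _ _ hh1; case: H1 e1 m1 {hh1} => R1 B1 e1 m1.
    have [H2 hh2] := not_all_ex_not _ _ h2; have [e2 m2] := imply_to_and _ _ hh2; case: H2 e2 m2 {hh2} => R2 B2 e2 m2.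
    move: e1 e2; rewrite /ext /red /blue /= => -[r11 b11 r12 b12 p1] [r21 b21 r22 b22 q2].
    move: m1 m2; rewrite /= !orbF => m1 m2.
    pose c : colouring N := [ffun e => if e \in Q then e \in R2
                                       else if e \in P then e \in R1 else e \in RH].
    have [S [b [cS Hc]]] := Ram c.
    case: (classic (exists p, p \in P /\ p \subset S)) => [[p [pP pS]]|nP]; last first.
      apply: m2; apply: (side (X := Q) (b := b) cS r21 b21 q2).
      - move=> e pe eS nQ; apply: covH => //; apply/negP => eP; apply: nP; by exists e.
      - move=> e pe eS; have := Hc e pe eS; rewrite ffunE; case: ifP => // _.
        case: ifP => // eP; exfalso; apply: nP; by exists e.
    case: (classic (exists q, q \in Q /\ q \subset S)) => [[q [qQ qS]]|nQ]; last first.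
      apply: m1; apply: (side (X := P) (b := b) cS r11 b11 p1).
      - move=> e pe eS nP'; apply: covH => //; apply/negP => eQ; apply: nQ; by exists e.
      - move=> e pe eS; have := Hc e pe eS; rewrite ffunE; case: ifP => [eQ|_ //].
        exfalso; apply: nQ; by exists e.
    case: (Hind p q pP qQ) => d [_ [_ [[u [v [uP vQ uvR]]] [u' [v' [uP' vQ' uvB]]]]]].
    rewrite /red /blue /= in uvR uvB.
    have pr a a' : a \in p -> a' \in q -> is_pair [set a; a'] /\ [set a; a'] \subset S.
      move=> ap aq; split.
      - rewrite /is_pair cards2.
        have ne : a != a' by apply/eqP => eq; move: aq; rewrite -eq (disjointFr d ap).
        by rewrite ne.
      - apply/subsetP => z; rewrite !inE => /orP[]/eqP->;
          [exact: (subsetP pS)|exact: (subsetP qS)].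
    have [pr1 s1] := pr _ _ uP vQ; have [pr2 s2] := pr _ _ uP' vQ'.
    have := Hc _ pr1 s1; have := Hc _ pr2 s2; rewrite !ffunE.
    have nPQ x : x \in R \/ x \in B -> (x \in Q = false) /\ (x \in P = false).
      move=> h; split; [apply/negP => /HQ /unbE [_ nR nB]|apply/negP => /HP /unbE [_ nR nB]];
        (case: h => h; [by move: nR; rewrite h | by move: nB; rewrite h]).
    have [-> ->] := nPQ _ (or_intror uvB); have [-> ->] := nPQ _ (or_introl uvR).
    rewrite (subsetP r1 _ uvR) => g1 g2; rewrite -g2 in g1.
    move: g1 => /(subsetP r2); rewrite inE => /orP[xR|xE].
    - by move: (disjointFr RBd xR); rewrite uvB.
    - by move: xE; rewrite inE => /andP[/andP[/unbE[_ _]]]; rewrite uvB.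
  case: claim => cl.
  - apply: (@bw_mono _ _ (#|P| + 0)); first by rewrite addn0 leq_maxl.
    apply: build => // e eP; apply: unbH; by rewrite inE eP.
  - apply: (@bw_mono _ _ (#|Q| + 0)); first by rewrite addn0 leq_maxr.
    apply: build => // e eQ; apply: unbH; by rewrite inE eQ orbT.
rewrite /sG /num_edges /red /blue /=.
have [m1 [m2 m3]] := arith cnt.
apply: (leq_trans _ (leq_bigmax_cond (Ordinal m1) _)) => //=.
apply/andP; split; first exact: m2.
exact: bw_mono win.
Qed.
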